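(* Let $\varepsilon>0$ be such that $1/\varepsilon\ge 3$ is an integer, and let $I$ be an input of offline Ordered Open End Bin Packing with $n$ items. Let $\mathrm{OPT}'$ be a feasible solution for $I$, of cost $\mathrm{opt}'$, in which every exceeding item has size at least $\varepsilon^2$. Then the minimum cost $\mathrm{opt}_{nice}$ of a nice solution for $I$ satisfies $\mathrm{opt}_{nice}\le (1+\varepsilon)\,\mathrm{opt}'+\frac1\varepsilon$ (in particular, a nice solution exists).
   Context: Ordered Open End Bin Packing (offline): items $1,\dots,n$ with sizes in $(0,1]$ are given as a sequence; a feasible solution partitions the items into bins so that in every bin, the total size of all items except the item of maximum index is strictly below $1$. Cost = number of bins. For a bin whose total size is at least $1$, its exceeding item is its item of maximum index; a bin of total size strictly below $1$ has no exceeding item. A feasible solution $S$ has a certificate $(e_0,e_1,\dots,e_{1/\varepsilon})$ if (1) $0=e_0<e_1\le e_2\le\dots\le e_{1/\varepsilon}=n$ and $e_1,\dots,e_{1/\varepsilon-1}$ are integers, and (2) for every bin $B$ of $S$, either the total size of $B$ is strictly below $1$, or there is an integer $i$ such that the exceeding item of $B$ has index strictly larger than $e_i$ and all other items of $B$ have indices at most $e_i$. A feasible solution is nice if every exceeding item of its bins has size at least $\varepsilon^2$ and it has some certificate. $\mathrm{opt}_{nice}$ denotes the minimum cost among nice solutions. *)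

(* Defs.v *)
(* Items 1..n are represented by 'I_n, the ordinal j standing
   for the item of index j+1. A solution is a partition of the item set into
   bins (nonempty, pairwise disjoint sets covering all items). *)
From HB Require Import structures.
From mathcomp Require Import all_boot all_order all_algebra.
Set Implicit Arguments.
Unset Strict Implicit.
Unset Printing Implicit Defensive.
Import Order.TTheory GRing.Theory Num.Theory.
Local Open Scope ring_scope.

Section OOEBP.
Variables (R : realFieldType) (n : nat).

Definition is_max_item (B : {set 'I_n}) (j : 'I_n) : bool :=
  (j \in B) && [forall i in B, (i <= j)%N].

Definition bin_size (s : 'I_n -> R) (B : {set 'I_n}) : R := \sum_(i in B) s i.

Definition is_solution (S : {set {set 'I_n}}) : bool :=
  partition S [set: 'I_n].

Definition feasible (s : 'I_n -> R) (S : {set {set 'I_n}}) : Prop :=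
  is_solution S /\
  forall B, B \in S -> forall j, is_max_item B j ->
    \sum_(i in B | i != j) s i < 1.

(* every exceeding item (the max-index item of a bin of total size >= 1)
   has size at least t *)
Definition exceeding_at_least (s : 'I_n -> R) (S : {set {set 'I_n}}) (t : R)
  : Prop :=
  forall B, B \in S -> 1 <= bin_size s B ->
    forall j, is_max_item B j -> t <= s j.

(* certificate (e_0, ..., e_k), k = 1/eps, all integers (e_0 = 0, e_k = n);
   indices here are 1-based: the ordinal j has index j+1. *)
Definition certificate (k : nat) (s : 'I_n -> R) (S : {set {set 'I_n}})
  (e : nat -> nat) : Prop :=
  [/\ e 0%N = 0%N, (0 < e 1%N)%N,
      (forall i, (1 <= i)%N -> (i < k)%N -> (e i <= e i.+1)%N),
      e k = n &
      forall B, B \in S -> ~ (bin_size s B < 1) ->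
        exists2 i : nat, (i <= k)%N &
          forall j, is_max_item B j ->
            (e i < j.+1)%N /\ forall l, l \in B -> l != j -> (l.+1 <= e i)%N].

(* nice solution, for eps = 1/k *)
Definition nice (k : nat) (s : 'I_n -> R) (S : {set {set 'I_n}}) : Prop :=
  feasible s S /\ exceeding_at_least s S ((k%:R)^-1 ^+ 2) /\
  exists e, certificate k s S e.

End OOEBP.

(* Main.v *)
Require Import Defs.
From HB Require Import structures.
From mathcomp Require Import all_boot all_order all_algebra.
Import Order.TTheory GRing.Theory Num.Theory.
Set Implicit Arguments. Unset Strict Implicit. Unset Printing Implicit Defensive.
Local Open Scope ring_scope.

Section Pf.
Variables (R : realFieldType) (n : nat).

Lemma max_exists (B : {set 'I_n}) x : x \in B -> exists j, is_max_item B j.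
Proof.
move=> Bx; case: (@arg_maxnP _ x (mem B) (fun i : 'I_n => nat_of_ord i) Bx).
move=> j Bj Hj; exists j; apply/andP; split => //.
by apply/forall_inP => i /Hj.
Qed.

Definition mxd (d : 'I_n) (B : {set 'I_n}) : 'I_n :=
  odflt d [pick j | is_max_item B j].

Lemma max_uniq (B : {set 'I_n}) (j1 j2 : 'I_n) : is_max_item B j1 -> is_max_item B j2 -> j1 = j2.
Proof.
move=> /andP[B1 /forall_inP H1] /andP[B2 /forall_inP H2].
by apply/val_inj/eqP; rewrite eqn_leq H1 // H2.
Qed.

Lemma mxdP d (B : {set 'I_n}) x : x \in B -> is_max_item B (mxd d B).
Proof.
move=> Bx; rewrite /mxd; case: pickP => [j //|H].
by have [j Hj] := max_exists Bx; rewrite H in Hj.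
Qed.

Lemma sum_sub (s : 'I_n -> R) (P Q : pred 'I_n) :
  (forall i, 0 <= s i) -> (forall i, P i -> Q i) ->
  \sum_(i | P i) s i <= \sum_(i | Q i) s i.
Proof.
move=> s0 PQ; rewrite [X in X <= _]big_mkcond [X in _ <= X]big_mkcond.
apply: ler_sum => i _; case: (boolP (P i)) => Pi; first by rewrite PQ.
by case: ifP.
Qed.

Variables (k : nat) (s : 'I_n -> R) (O : {set {set 'I_n}}).
Hypotheses (hk : (3 <= k)%N) (hn : (0 < n)%N)
  (hs : forall i, 0 < s i /\ s i <= 1) (hF : feasible s O)
  (hE : exceeding_at_least s O ((k%:R)^-1 ^+ 2)).

Let s0 i : 0 <= s i. Proof. by case: (hs i) => /ltW. Qed.

Let partO : partition O [set: 'I_n]. Proof. by case: hF. Qed.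
Let covO : cover O = [set: 'I_n]. Proof. by case/and3P: partO => /eqP. Qed.
Let trivO : trivIset O. Proof. by case/and3P: partO. Qed.

Definition blk (x : 'I_n) := pblock O x.
Lemma blk_in x : blk x \in O.
Proof. by apply: pblock_mem; rewrite covO inE. Qed.
Lemma in_blk x : x \in blk x.
Proof. by rewrite /blk mem_pblock covO inE. Qed.

Definition full (B : {set 'I_n}) := 1 <= bin_size s B.
Definition top (x : 'I_n) := mxd x (blk x).
Lemma top_max x : is_max_item (blk x) (top x).
Proof. exact: mxdP (in_blk x). Qed.
Lemma top_in x : top x \in blk x.
Proof. by case/andP: (top_max x). Qed.
Lemma blk_same x y : y \in blk x -> blk y = blk x.
Proof. by move=> h; apply: same_pblock. Qed.
Lemma blk_top x : blk (top x) = blk x.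
Proof. exact/blk_same/top_in. Qed.
Lemma top_le (x : 'I_n) : (x <= top x)%N.
Proof. by case/andP: (top_max x) => _ /forall_inP; apply; apply: in_blk. Qed.
Lemma top_eq x y : blk x = blk y -> top x = top y.
Proof. by move=> e; apply: max_uniq (top_max x) _; rewrite e; apply: top_max. Qed.
Lemma top_top x : top (top x) = top x.
Proof. by apply: top_eq; rewrite blk_top. Qed.

Lemma blk_sum x : \sum_(i in blk x | i != top x) s i < 1.
Proof. by case: hF => _ H; apply: H (blk_in x) _ (top_max x). Qed.

Definition M := [set j | full (blk j) && (top j == j)].
Definition F := #|M|.
Definition rk (j : 'I_n) := #|[set j' in M | (j' < j)%N]|.
Definition g := (F %/ k + 1)%N.

Lemma rk_lt (j : 'I_n) : j \in M -> (rk j < F)%N.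
Proof.
move=> jM; apply: proper_card; rewrite properEneq; apply/andP; split.
  by apply/eqP => e; move: jM; rewrite -e inE ltnn andbF.
by apply/subsetP => y; rewrite inE => /andP[].
Qed.

Lemma rk_le (j1 j2 : 'I_n) : (j1 <= j2)%N -> (rk j1 <= rk j2)%N.
Proof.
move=> h; apply: subset_leq_card; apply/subsetP => y; rewrite !inE.
by case/andP => -> /= /leq_trans; apply.
Qed.

Lemma rk_mono (j1 j2 : 'I_n) : j1 \in M -> (j1 < j2)%N -> (rk j1 < rk j2)%N.
Proof.
move=> jM h; apply: proper_card; rewrite properEneq; apply/andP; split.
  apply/eqP => e; have : j1 \in [set j' in M | (j' < j2)%N] by rewrite inE jM h.
  by rewrite -e inE ltnn andbF.
by apply/subsetP => y; rewrite !inE => /andP[-> /= /leq_trans]; apply; apply: ltnW.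
Qed.

Lemma rk_inj j1 j2 : j1 \in M -> j2 \in M -> rk j1 = rk j2 -> j1 = j2.
Proof.
move=> h1 h2 e; apply: val_inj; case: (ltngtP j1 j2) => // h.
  by have := rk_mono h1 h; rewrite e ltnn.
by have := rk_mono h2 h; rewrite e ltnn.
Qed.

Lemma topM x : full (blk x) -> top x \in M.
Proof. by move=> f; rewrite inE blk_top f top_top eqxx. Qed.

Definition N := (F + F %/ k).+1.
Definition lv (x : 'I_n) := if top x == x then rk x else (rk (top x) + g)%N.
Definition lab (x : 'I_n) : 'I_n + 'I_N :=
  if full (blk x) then inr (inord (lv x)) else inl (top x).

Lemma lv_lt x : full (blk x) -> (lv x < N)%N.
Proof.
move=> f; rewrite /lv /N /g; case: eqP => e.
  have : x \in M by rewrite inE f e eqxx.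
  by move/rk_lt => h; apply: (leq_trans h); rewrite leqW // leq_addr.
by have := rk_lt (topM f); rewrite addn1 addnS ltnS ltn_add2r.
Qed.


Definition C (x : 'I_n) := [set y in [set: 'I_n] | lab x == lab y].
Lemma inC x y : (y \in C x) = (lab x == lab y).
Proof. by rewrite !inE. Qed.

Lemma C_nonfull x y : ~~ full (blk x) -> y \in C x -> y \in blk x.
Proof.
rewrite inC /lab => /negbTE ->; case: ifP => // _ /eqP [] e.
by rewrite -(blk_top x) e blk_top in_blk.
Qed.

Lemma C_full x y : full (blk x) -> y \in C x -> full (blk y) /\ lv y = lv x.
Proof.
move=> fx; rewrite inC /lab fx; case: ifP => // fy /eqP [] e; split => //.
by rewrite -(inordK (lv_lt fx)) e inordK // lv_lt.
Qed.

Lemma g_pos : (0 < g)%N. Proof. by rewrite /g addn1. Qed.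

Lemma low_low x y y' : full (blk x) -> y \in C x -> y' \in C x ->
  top y != y -> top y' != y' -> blk y = blk y'.
Proof.
move=> fx yC y'C l l'; have [fy ey] := C_full fx yC; have [fy' ey'] := C_full fx y'C.
move: ey ey'; rewrite /lv (negbTE l) (negbTE l') => e1 e2.
have /eqP : (rk (top y) + g = rk (top y') + g)%N by rewrite e1 e2.
rewrite eqn_add2r => /eqP /(rk_inj (topM fy) (topM fy')) e.
by rewrite -(blk_top y) e blk_top.
Qed.

Lemma top_low x y y' : full (blk x) -> y \in C x -> y' \in C x ->
  top y == y -> top y' != y' -> (y' < y)%N.
Proof.
move=> fx yC y'C t l'; have [fy ey] := C_full fx yC; have [fy' ey'] := C_full fx y'C.
move: ey ey'; rewrite /lv t (negbTE l') => e1 e2.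
have h : (rk (top y') < rk y)%N by rewrite e1 -e2 -addn1 leq_add2l g_pos.
have h2 : (top y' < y)%N by rewrite ltnNge; apply/negP => /rk_le; rewrite leqNgt h.
have h3 : (y' < top y')%N.
  rewrite ltn_neqAle top_le andbT; apply: contraNneq l' => e; apply/eqP/val_inj; exact: esym.
exact: ltn_trans h3 h2.
Qed.

Lemma top_top2 x y y' : full (blk x) -> y \in C x -> y' \in C x ->
  top y == y -> top y' == y' -> y = y'.
Proof.
move=> fx yC y'C t t'; have [fy ey] := C_full fx yC; have [fy' ey'] := C_full fx y'C.
apply: rk_inj; first by rewrite inE fy t.
  by rewrite inE fy' t'.
by move: ey ey'; rewrite /lv t t' => -> ->.
Qed.


Lemma others_low x j i : full (blk x) -> is_max_item (C x) j ->
  i \in C x -> i != j -> top i != i.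
Proof.
move=> fx /andP[jC /forall_inP jm] iC ij; apply/negP => ti.
case: (boolP (top j == j)) => tj.
  by move: ij; rewrite (top_top2 fx iC jC ti tj) eqxx.
by have := top_low fx iC jC ti tj; rewrite ltnNge jm.
Qed.

Lemma lowsum (P : pred 'I_n) y :
  (forall i, P i -> (i \in blk y) && (i != top y)) -> \sum_(i | P i) s i < 1.
Proof.
move=> h; apply: le_lt_trans (blk_sum y); apply: sum_sub => // i /h.
Qed.

Lemma L1 x j : is_max_item (C x) j -> \sum_(i in C x | i != j) s i < 1.
Proof.
move=> jm; case: (boolP (full (blk x))) => fx; last first.
  apply: le_lt_trans (_ : bin_size s (blk x) < 1); last by rewrite ltNge.
  by apply: sum_sub => // i /andP[/(C_nonfull fx)].
case: (pickP (fun i => (i \in C x) && (i != j))) => [i0 /andP[i0C i0j]|none].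
  apply: (@lowsum _ i0) => i /andP[iC ij].
  have li := others_low fx jm iC ij; have li0 := others_low fx jm i0C i0j.
  have e := low_low fx iC i0C li li0.
  by rewrite -e in_blk -(top_eq e) eq_sym.
rewrite big_pred0 ?ltr01 // => i; exact: none.
Qed.

Lemma L2 x j : is_max_item (C x) j -> full (C x) ->
  [/\ top j == j, full (blk j), full (blk x) &
   forall l, l \in C x -> l != j -> top l != l /\ (rk (top l) + g)%N = rk j].
Proof.
move=> jm fC; have jC : j \in C x by case/andP: jm.
case: (boolP (full (blk x))) => fx; last first.
  move: fC; rewrite /full leNgt => /negP; case.
  apply: le_lt_trans (_ : bin_size s (blk x) < 1); last by rewrite ltNge.
  by apply: sum_sub => // i /(C_nonfull fx).
have [fj ej] := C_full fx jC.
have tj : top j == j.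
  apply/negPn/negP => lj; move: fC; rewrite /full leNgt => /negP; case.
  apply: (@lowsum _ j) => i iC.
  have li : top i != i.
    by case: (eqVneq i j) => [->//|]; apply: others_low fx jm iC.
  have e := low_low fx iC jC li lj.
  by rewrite -e in_blk -(top_eq e) eq_sym.
split => // l lC lj; have ll := others_low fx jm lC lj; split => //.
have [_ el] := C_full fx lC; move: el; rewrite -ej /lv (negbTE ll) tj.
by [].
Qed.


Definition ecert (i : nat) : nat :=
  if i == 0%N then 0%N else if (i < k)%N then
    maxn 1 (\max_(j' in M | (rk j' < i * g)%N) j'.+1) else n.

Lemma bigmax_le_n i : (\max_(j' in M | (rk j' < i * g)%N) j'.+1 <= n)%N.
Proof. by apply/bigmax_leqP => j' _; apply: ltn_ord. Qed.

Lemma C_self x : x \in C x. Proof. by rewrite inC. Qed.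

Lemma cert_bin x : ~ (bin_size s (C x) < 1) ->
  exists2 i : nat, (i <= k)%N &
    forall j, is_max_item (C x) j ->
      (ecert i < j.+1)%N /\ forall l, l \in C x -> l != j -> (l.+1 <= ecert i)%N.
Proof.
move=> nf; have fC : full (C x) by rewrite /full leNgt; apply/negP.
have [j jm] := max_exists (C_self x).
have [tj fj fx lows] := L2 jm fC.
have jM : j \in M by rewrite inE fj tj.
have Hj : forall j', is_max_item (C x) j' -> j' = j by move=> j' /max_uniq; apply.
case: (ltnP (rk j) g) => tg.
  exists 0%N => // j' /Hj -> ; split => // l lC lj.
  by have [_ e] := lows l lC lj; move: tg; rewrite -e ltnNge leq_addl.
have kpos : (0 < k)%N by apply: leq_trans hk.
have q1 : (0 < rk j %/ g)%N by rewrite divn_gt0 // g_pos.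
have qk : (rk j %/ g < k)%N.
  rewrite ltn_divLR ?g_pos //; apply: leq_trans (rk_lt jM) _.
  by rewrite /g addn1 mulnC ltnW // ltn_ceil.
exists (rk j %/ g)%N; first exact: ltnW.
move=> j' /Hj ->; rewrite /ecert eqn0Ngt q1 qk /=; split.
  rewrite ltnS geq_max; apply/andP; split.
    have : (0 < rk j)%N by apply: leq_trans tg; apply: g_pos.
    rewrite lt0n; case: (posnP j) => // j0; case/negP; apply/eqP.
    apply/eqP; rewrite cards_eq0; apply/eqP/setP => y; rewrite !inE j0 ltn0.
    by rewrite andbF.
  apply/bigmax_leqP => y /andP[yM ry]; rewrite ltnNge; apply/negP => /rk_le.
  by rewrite leqNgt (leq_trans ry) // leq_trunc_div.
move=> l lC lj; have [ll e] := lows l lC lj.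
have [fl _] := C_full fx lC.
apply: leq_trans (leq_maxr _ _); apply: (@leq_trans (top l).+1).
  by rewrite ltnS top_le.
apply: (leq_bigmax_cond (top l)); rewrite topM //=.
have := ltn_ceil (rk j) g_pos; rewrite -e mulSn [(g + _)%N]addnC ltn_add2r; apply.
Qed.


Definition T := [set j | top j == j].
Definition NF := [set j | ~~ full (blk j) && (top j == j)].

Lemma cardT_O : (#|T| <= #|O|)%N.
Proof.
rewrite -(@card_in_imset _ _ blk T).
  apply: subset_leq_card; apply/subsetP => B /imsetP[j _ ->]; exact: blk_in.
move=> j1 j2; rewrite !inE => /eqP t1 /eqP t2 e.
by rewrite -t1 -t2; apply: top_eq.
Qed.

Lemma NF_M : (#|NF| + F = #|T|)%N.
Proof.
rewrite -(cardsID [set j | full (blk j)] T) addnC /F; congr (_ + _)%N.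
  by apply: eq_card => j; rewrite !inE andbC.
by apply: eq_card => j; rewrite !inE andbC.
Qed.

Definition Sol := preim_partition lab [set: 'I_n].

Lemma Sol_eq : Sol = [set C x | x in [set: 'I_n]].
Proof. by []. Qed.

Lemma card_Sol : (#|Sol| <= #|O| + F %/ k + 1)%N.
Proof.
pose h := fun l => [set y in [set: 'I_n] | l == lab y].
have -> : Sol = h @: (lab @: [set: 'I_n]) by rewrite Sol_eq -imset_comp.
apply: leq_trans (leq_imset_card _ _) _.
have sub : lab @: [set: 'I_n] \subset (inl @: NF) :|: (inr @: [set: 'I_N]).
  apply/subsetP => l /imsetP[x _ ->]; rewrite /lab; case: ifP => fx.
    by rewrite inE; apply/orP; right; apply: imset_f; rewrite inE.
  rewrite inE; apply/orP; left; apply: imset_f.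
  by rewrite inE blk_top fx top_top eqxx.
apply: leq_trans (subset_leq_card sub) _.
apply: leq_trans (leq_card_setU _ _).1 _.
have h1 := leq_imset_card (@inl 'I_n 'I_N) NF; have h2 := leq_imset_card (@inr 'I_n 'I_N) [set: 'I_N].
rewrite cardsT card_ord in h2.
have := cardT_O; rewrite -NF_M /N => h3.
apply: leq_trans (leq_add h1 h2) _.
rewrite /N -addn1 !addnA leq_add2r leq_add2r; exact: h3.
Qed.


Lemma F_le : (F <= #|O|)%N.
Proof. by apply: leq_trans cardT_O; rewrite -NF_M leq_addl. Qed.

Lemma inSol B : B \in Sol -> exists x, B = C x.
Proof. by rewrite Sol_eq => /imsetP[x _ ->]; exists x. Qed.

Lemma final : exists2 S : {set {set 'I_n}}, nice k s S &
    (#|S|%:R : R) <= (1 + (k%:R)^-1) * (#|O|%:R) + k%:R.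
Proof.
exists Sol.
  split; first split.
  - exact: preim_partitionP.
  - by move=> B /inSol[x ->] j jm; apply: L1.
  split.
    move=> B /inSol[x ->] fC j jm; have [tj fj _ _] := L2 jm fC.
    apply: hE (blk_in j) fj _ _; rewrite -{2}(eqP tj); exact: top_max.
  exists ecert; split.
  - by [].
  - by rewrite /ecert /= (leq_trans _ hk) // leq_maxl.
  - move=> i i1 ik; rewrite /ecert ik -[(i == 0)%N]negbK -lt0n i1 /=.
    case: ifP => ik1.
      rewrite geq_max leq_maxl /=; apply: leq_trans (leq_maxr _ _).
      apply/bigmax_leqP => y /andP[yM ry]; apply: leq_bigmax_cond.
      by rewrite yM /= (leq_trans ry) // leq_mul2r leqnSn orbT.
    by rewrite geq_max hn bigmax_le_n.
  - by rewrite /ecert ltnn; case: k hk.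
  - by move=> B /inSol[x ->]; apply: cert_bin.
have kpos : (0 < k)%N by apply: leq_trans hk.
have kR : 0 < (k%:R : R) by rewrite ltr0n.
apply: le_trans (_ : ((#|O| + F %/ k + 1)%N%:R : R) <= _).
  by rewrite ler_nat card_Sol.
rewrite !natrD mulrDl mul1r -!addrA lerD2l lerD //; last by rewrite ler1n.
rewrite mulrC ler_pdivlMr // -natrM ler_nat.
by apply: leq_trans F_le; apply: leq_trunc_div.
Qed.

End Pf.

Theorem mainTheorem3 (R : realFieldType) (k n : nat) (s : 'I_n -> R)
    (OPT' : {set {set 'I_n}}) :
  (3 <= k)%N -> (0 < n)%N ->
  (forall i, 0 < s i /\ s i <= 1) ->
  feasible s OPT' ->
  exceeding_at_least s OPT' ((k%:R)^-1 ^+ 2) ->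
  exists2 S : {set {set 'I_n}}, nice k s S &
    (#|S|%:R : R) <= (1 + (k%:R)^-1) * (#|OPT'|%:R) + k%:R.
Proof. by move=> hk hn hs hF hE; apply: final. Qed.
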